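(* Let $w \in \mathbb{R}^n$ with $w_j > 0$ for all $j$, and let $x \in \mathbb{R}^n$ with $x_j > 0$ for $2 \le j \le n$. Then \[ \min_{z \in \Omega_1} \|x - z\| = \min_{t \in [x_1^+,\,1]} \|x - \phi_t(x)\|. \] Moreover, if $z^* = \arg\min_{z \in \Omega_1} \|x - z\|$, then for $2 \le j \le n$: $w_1 z^*_j < w_j z^*_1$ if $w_1 x_j < w_j z^*_1$, and $w_1 z^*_j = w_j z^*_1$ if $w_1 x_j \ge w_j z^*_1$.
   Context: $\|\cdot\|$ is the Euclidean norm on $\mathbb{R}^n$. $\Omega_1 := \{ z \in \mathbb{R}^n_+ : z_1 \le 1,\ w_1 z_j \le w_j z_1 \text{ for } 2 \le j \le n\}$. For $t \in \mathbb{R}$, $\phi_t : \mathbb{R}^n \to \mathbb{R}^n$ is defined by $\phi_t(x)_1 = t$, and for $j \ne 1$: $\phi_t(x)_j = \frac{w_j}{w_1} t$ if $\frac{w_1}{w_j} x_j \ge t$, and $\phi_t(x)_j = x_j$ otherwise. $x_1^+ := \min\{1, \max\{0, x_1\}\}$. *)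

(* Defs.v *)
From Stdlib Require Import Reals Lra.
Open Scope R_scope.

(* Vectors in R^n are functions nat -> R; only the coordinates 0..n-1 matter.
   The paper's coordinate j (1-based) is index j-1 here; in particular the
   paper's first coordinate x_1 is [x 0]. *)

Fixpoint rsum (n : nat) (f : nat -> R) : R :=
  match n with
  | O => 0
  | S k => rsum k f + f k
  end.

Definition enorm (n : nat) (v : nat -> R) : R :=
  sqrt (rsum n (fun i => (v i) ^ 2)).

Definition vsub (x z : nat -> R) : nat -> R := fun i => x i - z i.

Definition Omega1 (n : nat) (w z : nat -> R) : Prop :=
  (forall j, (j < n)%nat -> 0 <= z j) /\
  z 0%nat <= 1 /\
  (forall j, (1 <= j < n)%nat -> w 0%nat * z j <= w j * z 0%nat).

Definition phi (w : nat -> R) (t : R) (x : nat -> R) : nat -> R :=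
  fun j =>
    if Nat.eqb j 0 then t
    else if Rle_dec t (w 0%nat / w j * x j) then w j / w 0%nat * t
    else x j.

Definition x1plus (x : nat -> R) : R := Rmin 1 (Rmax 0 (x 0%nat)).

(* Main.v *)
Require Import Defs.
From Stdlib Require Import Reals Lra Lia.
Open Scope R_scope.
Lemma cid t : continuity_pt (fun u => u) t.
Proof. apply derivable_continuous_pt, derivable_pt_id. Qed.
Lemma ccst c t : continuity_pt (fun _ => c) t.
Proof. apply continuity_pt_const; intros a b; reflexivity. Qed.
Lemma cplus f g t : continuity_pt f t -> continuity_pt g t -> continuity_pt (fun u => f u + g u) t.
Proof. intros; apply (continuity_pt_plus f g); auto. Qed.
Lemma cminus f g t : continuity_pt f t -> continuity_pt g t -> continuity_pt (fun u => f u - g u) t.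
Proof. intros; apply (continuity_pt_minus f g); auto. Qed.
Lemma cmult f g t : continuity_pt f t -> continuity_pt g t -> continuity_pt (fun u => f u * g u) t.
Proof. intros; apply (continuity_pt_mult f g); auto. Qed.
Lemma cabs f t : continuity_pt f t -> continuity_pt (fun u => Rabs (f u)) t.
Proof. intros; apply (continuity_pt_comp f Rabs); auto; apply Rcontinuity_abs. Qed.
Lemma cpow2 f t : continuity_pt f t -> continuity_pt (fun u => (f u)^2) t.
Proof. intros H. apply (cmult f (fun u => f u * 1)); auto. apply (cmult f (fun _ => 1)); auto; apply ccst. Qed.
Lemma cdiv2 f t : continuity_pt f t -> continuity_pt (fun u => f u / 2) t.
Proof. intros H. apply (cmult f (fun _ => /2)); auto; apply ccst. Qed.

Lemma rsum_le n f g : (forall i, (i<n)%nat -> f i <= g i) -> rsum n f <= rsum n g.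
Proof. induction n; simpl; intros H; [lra|].
 apply Rplus_le_compat; [apply IHn; intros; apply H; lia | apply H; lia]. Qed.

Lemma rsum_lt n f g j : (forall i, (i<n)%nat -> f i <= g i) -> (j<n)%nat -> f j < g j -> rsum n f < rsum n g.
Proof. induction n; intros H Hj Hfg; [lia|]. simpl. destruct (Nat.eq_dec j n).
 - subst. apply Rplus_le_lt_compat; [apply rsum_le; intros; apply H; lia| auto].
 - apply Rplus_lt_le_compat; [apply IHn; [intros; apply H; lia| lia| auto] | apply H; lia]. Qed.

Lemma rsum_nonneg n f : (forall i, (i<n)%nat -> 0 <= f i) -> 0 <= rsum n f.
Proof. induction n; simpl; intros H; [lra|].
 assert (0 <= f n) by (apply H; lia). assert (0 <= rsum n f) by (apply IHn; intros; apply H; lia). lra. Qed.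

Lemma rsum_ext n f g : (forall i, (i<n)%nat -> f i = g i) -> rsum n f = rsum n g.
Proof. induction n; simpl; intros H; [lra|].
 rewrite IHn by (intros; apply H; lia). rewrite H by lia. reflexivity. Qed.

Definition qf (w x : nat -> R) (i : nat) (t : R) : R :=
  match i with O => t | S _ => (x i + w i / w 0%nat * t - Rabs (x i - w i / w 0%nat * t)) / 2 end.
Definition Ff n w x t := rsum n (fun i => (x i - qf w x i t)^2).

Lemma Ff_cont n w x t : continuity_pt (Ff n w x) t.
Proof. induction n.
 - apply ccst.
 - unfold Ff; simpl. apply cplus; [exact IHn|]. apply cpow2. apply cminus; [apply ccst|].
   destruct n; simpl; [apply cid|].
   apply cdiv2. apply cminus. apply cplus; [apply ccst| apply cmult; [apply ccst|apply cid]].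
   apply cabs. apply cminus; [apply ccst| apply cmult; [apply ccst|apply cid]]. Qed.

Lemma qf_cases w x k t : 0 < w (S k) -> 0 < w 0%nat ->
  (w (S k) / w 0%nat * t <= x (S k) /\ qf w x (S k) t = w (S k) / w 0%nat * t) \/
  (x (S k) < w (S k) / w 0%nat * t /\ qf w x (S k) t = x (S k)).
Proof. intros. unfold qf. set (c := w (S k) / w 0%nat * t).
 unfold Rabs; destruct (Rcase_abs _); [right|left]; split; lra. Qed.

Lemma phi_qf w x t i : 0 < w i -> 0 < w 0%nat -> phi w t x i = qf w x i t.
Proof. intros Hi H0. destruct i as [|k]; [reflexivity|].
 assert (Hc: w (S k) / w 0%nat * (w 0%nat / w (S k) * x (S k)) = x (S k)) by (field; lra).
 assert (Hc2: w 0%nat / w (S k) * (w (S k) / w 0%nat * t) = t) by (field; lra).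
 assert (Hcp: 0 < w (S k) / w 0%nat) by (apply Rdiv_lt_0_compat; lra).
 unfold phi; simpl Nat.eqb; cbv iota. destruct (Rle_dec t (w 0%nat / w (S k) * x (S k))) as [h|h];
 destruct (qf_cases w x k t Hi H0) as [[A B]|[A B]]; rewrite B; auto.
 - exfalso. assert (w (S k) / w 0%nat * t <= w (S k) / w 0%nat * (w 0%nat / w (S k) * x (S k)))
     by (apply Rmult_le_compat_l; lra). nra.
 - exfalso. apply h. assert (w 0%nat / w (S k) * (w (S k) / w 0%nat * t) <= w 0%nat / w (S k) * x (S k)).
   { apply Rmult_le_compat_l; [|lra]. apply Rlt_le, Rdiv_lt_0_compat; lra. } nra. Qed.

Lemma x1plus_bounds x : 0 <= x1plus x <= 1.
Proof. unfold x1plus, Rmin, Rmax. repeat destruct Rle_dec; lra. Qed.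

Section S.
Variables (n : nat) (w x : nat -> R).
Hypothesis Hn : (1 <= n)%nat.
Hypothesis Hw : forall j, (j < n)%nat -> 0 < w j.
Hypothesis Hx : forall j, (1 <= j < n)%nat -> 0 < x j.

Lemma enorm_phi t : enorm n (vsub x (phi w t x)) = sqrt (Ff n w x t).
Proof. unfold enorm, Ff, vsub. f_equal. apply rsum_ext. intros i Hi.
 rewrite phi_qf; auto; apply Hw; lia. Qed.

Lemma lower z : Omega1 n w z -> exists s, x1plus x <= s <= 1 /\
   Ff n w x s <= rsum n (fun i => (vsub x z i)^2).
Proof. intros [Z0 [Z1 Z2]]. exists (Rmax (z 0%nat) (x1plus x)).
 pose proof (x1plus_bounds x). assert (0 <= z 0%nat) by (apply Z0; lia).
 split. { unfold Rmax; destruct Rle_dec; lra. }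
 apply rsum_le. intros i Hi. unfold vsub. destruct i as [|k].
 - simpl. unfold Rmax. destruct Rle_dec as [h|h]; [|lra].
   destruct (Req_dec (z 0%nat) (x1plus x)) as [e|e]; [rewrite e; lra|].
   assert (h': z 0%nat < x1plus x) by lra.
   assert (x1plus x <= x 0%nat) by (revert h' H H0; unfold x1plus, Rmin, Rmax; repeat destruct Rle_dec; lra).
   nra.
 - assert (w0: 0 < w 0%nat) by (apply Hw; lia). assert (wi: 0 < w (S k)) by (apply Hw; lia).
   set (s := Rmax (z 0%nat) (x1plus x)). assert (zs: z 0%nat <= s) by apply Rmax_l.
   set (c := w (S k) / w 0%nat). assert (cw: c * w 0%nat = w (S k)) by (unfold c; field; lra).
   assert (cp: 0 < c) by (apply Rdiv_lt_0_compat; lra).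
   assert (h1: w 0%nat * z (S k) <= w (S k) * z 0%nat) by (apply Z2; lia).
   assert (h2: 0 <= z (S k)) by (apply Z0; lia).
   assert (h3: z (S k) <= c * z 0%nat) by nra.
   assert (h4: c * z 0%nat <= c * s) by nra.
   destruct (qf_cases w x k s wi w0) as [[A B]|[A B]]; rewrite B; fold c in A |- *.
   + nra.
   + replace ((x (S k) - x (S k))^2) with 0 by ring. apply pow2_ge_0. Qed.

Lemma part1 : exists (zs : nat -> R) (ts : R),
      Omega1 n w zs /\
      (forall z, Omega1 n w z -> enorm n (vsub x zs) <= enorm n (vsub x z)) /\
      x1plus x <= ts <= 1 /\
      (forall t, x1plus x <= t <= 1 ->
         enorm n (vsub x (phi w ts x)) <= enorm n (vsub x (phi w t x))) /\
      enorm n (vsub x zs) = enorm n (vsub x (phi w ts x)).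
Proof. pose proof (x1plus_bounds x).
 destruct (continuity_ab_min (Ff n w x) (x1plus x) 1) as [ts [Hmin Hts]]; [lra| intros; apply Ff_cont|].
 assert (w0: 0 < w 0%nat) by (apply Hw; lia).
 exists (phi w ts x), ts. split; [|split; [|split; [auto|split; [|reflexivity]]]].
 - split; [|split].
   + intros j Hj. destruct j as [|k]; unfold phi; simpl; [lra|].
     assert (0 < w (S k)) by (apply Hw; lia). assert (0 < x (S k)) by (apply Hx; lia).
     destruct Rle_dec; [|lra]. apply Rmult_le_pos; [apply Rlt_le, Rdiv_lt_0_compat|]; lra.
   + unfold phi; simpl; lra.
   + intros j Hj. destruct j as [|k]; [lia|]. unfold phi; simpl.
     assert (0 < w (S k)) by (apply Hw; lia).
     destruct Rle_dec as [h|h].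
     * right; field; lra.
     * assert (w 0%nat / w (S k) * x (S k) < ts) by lra.
       assert (w (S k) * (w 0%nat / w (S k) * x (S k)) = w 0%nat * x (S k)) by (field; lra).
       nra.
 - intros z Hz. destruct (lower z Hz) as [s [Hs Hle]]. rewrite enorm_phi. unfold enorm.
   apply sqrt_le_1_alt. apply Rle_trans with (Ff n w x s); auto.
 - intros t Ht. rewrite !enorm_phi. apply sqrt_le_1_alt; auto. Qed.

Lemma local zs z j : Omega1 n w zs ->
  (forall z, Omega1 n w z -> enorm n (vsub x zs) <= enorm n (vsub x z)) ->
  Omega1 n w z -> (j < n)%nat -> (forall i, i <> j -> z i = zs i) ->
  (x j - zs j)^2 <= (x j - z j)^2.
Proof. intros Hzs Hmin Hz Hj Heq. destruct (Rle_dec ((x j - zs j)^2) ((x j - z j)^2)) as [h|h]; auto.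
 exfalso. assert (enorm n (vsub x z) < enorm n (vsub x zs)); [|specialize (Hmin z Hz); lra].
 unfold enorm. apply sqrt_lt_1_alt. split.
 - apply rsum_nonneg; intros; apply pow2_ge_0.
 - apply rsum_lt with j; auto; [|unfold vsub; lra]. intros i Hi. unfold vsub.
   destruct (Nat.eq_dec i j); [subst; lra| rewrite Heq; auto; lra]. Qed.

Lemma part2 : forall zs : nat -> R,
      Omega1 n w zs ->
      (forall z, Omega1 n w z -> enorm n (vsub x zs) <= enorm n (vsub x z)) ->
      forall j, (1 <= j < n)%nat ->
        (w 0%nat * x j < w j * zs 0%nat -> w 0%nat * zs j < w j * zs 0%nat) /\
        (w 0%nat * x j >= w j * zs 0%nat -> w 0%nat * zs j = w j * zs 0%nat).
Proof. intros zs Hzs Hmin j Hj. pose proof Hzs as [Z0 [Z1 Z2]].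
 assert (w0: 0 < w 0%nat) by (apply Hw; lia). assert (wj: 0 < w j) by (apply Hw; lia).
 assert (xj: 0 < x j) by (apply Hx; lia). assert (z0: 0 <= zs 0%nat) by (apply Z0; lia).
 assert (zj: 0 <= zs j) by (apply Z0; lia). assert (hj: w 0%nat * zs j <= w j * zs 0%nat) by (apply Z2; lia).
 split; intros H.
 - set (z := fun i => if Nat.eq_dec i j then x j else zs i).
   assert (Hz: Omega1 n w z).
   { unfold z; split; [|split].
     + intros i Hi; destruct Nat.eq_dec; [lra| auto].
     + destruct Nat.eq_dec; [lia| auto].
     + intros i Hi; destruct (Nat.eq_dec 0 j); [lia|]. destruct Nat.eq_dec; [subst; lra| auto]. }
   pose proof (local zs z j Hzs Hmin Hz ltac:(lia)) as L.
   assert (Lz: (x j - zs j)^2 <= (x j - z j)^2) by (apply L; intros i Hi; unfold z; destruct Nat.eq_dec; [lia|auto]).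
   unfold z in Lz; destruct Nat.eq_dec; [|lia].
   destruct (Rle_lt_or_eq_dec _ _ hj) as [l|ee]; auto. exfalso.
   assert (x j < zs j) by nra. nra.
 - set (v := w j * zs 0%nat / w 0%nat).
   assert (wv: w 0%nat * v = w j * zs 0%nat) by (unfold v; field; lra).
   set (z := fun i => if Nat.eq_dec i j then v else zs i).
   assert (Hz: Omega1 n w z).
   { unfold z; split; [|split].
     + intros i Hi; destruct Nat.eq_dec; [|auto]. unfold v. apply Rmult_le_pos; [nra|]. apply Rlt_le, Rinv_0_lt_compat; lra.
     + destruct Nat.eq_dec; [lia| auto].
     + intros i Hi; destruct (Nat.eq_dec 0 j); [lia|]. destruct Nat.eq_dec; [subst; lra| auto]. }
   pose proof (local zs z j Hzs Hmin Hz ltac:(lia)) as L.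
   assert (Lz: (x j - zs j)^2 <= (x j - z j)^2) by (apply L; intros i Hi; unfold z; destruct Nat.eq_dec; [lia|auto]).
   unfold z in Lz; destruct Nat.eq_dec; [|lia].
   destruct (Rle_lt_or_eq_dec _ _ hj) as [l|ee]; auto. exfalso.
   assert (zs j < v) by nra. assert (v <= x j) by nra. nra. Qed.
End S.

Theorem mainTheorem3 (n : nat) (w x : nat -> R)
  (Hn : (1 <= n)%nat)
  (Hw : forall j, (j < n)%nat -> 0 < w j)
  (Hx : forall j, (1 <= j < n)%nat -> 0 < x j) :
  (* both minima are attained and coincide *)
  (exists (zs : nat -> R) (ts : R),
      Omega1 n w zs /\
      (forall z, Omega1 n w z -> enorm n (vsub x zs) <= enorm n (vsub x z)) /\
      x1plus x <= ts <= 1 /\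
      (forall t, x1plus x <= t <= 1 ->
         enorm n (vsub x (phi w ts x)) <= enorm n (vsub x (phi w t x))) /\
      enorm n (vsub x zs) = enorm n (vsub x (phi w ts x))) /\
  (* structure of the minimizer z* *)
  (forall zs : nat -> R,
      Omega1 n w zs ->
      (forall z, Omega1 n w z -> enorm n (vsub x zs) <= enorm n (vsub x z)) ->
      forall j, (1 <= j < n)%nat ->
        (w 0%nat * x j < w j * zs 0%nat -> w 0%nat * zs j < w j * zs 0%nat) /\
        (w 0%nat * x j >= w j * zs 0%nat -> w 0%nat * zs j = w j * zs 0%nat)).
Proof. split; [apply part1 | apply part2]; auto. Qed.
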